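(* Let $(P,u)\in\mathrm{Elt}(\mathrm{Pol}_\omega^* )$. Then $(P,u)$ is a polyplex if and only if $(P,1_u)$ is a polyplex.
   Context: An $\omega$-precategory is an $\omega$-globular set with identities $1_u$ and compositions $u\ast_iv$ satisfying the axioms of strict $\omega$-categories except the interchange law. An $\omega$-polygraph $P$ consists of sets $P_k$ of $k$-generators with globular sources/targets in the free precategory on lower generators; $P^*$ is its free $\omega$-precategory; $\mathrm{Pol}_\omega$ is the category of $\omega$-polygraphs and generator-wise morphisms $F$, inducing prefunctors $F^*$. $\mathrm{Elt}(\mathrm{Pol}_\omega^* )$ has objects $(P,u)$ with $u$ a cell of $P^*$ of any dimension and morphisms $(P,u)\to(Q,v)$ the polygraph morphisms $F$ with $F^*(u)=v$. An element $(P,u)$ is principal if every morphism into it whose underlying polygraph morphism is a monomorphism is an isomorphism; it is primitive if it is principal and every morphism $(Q,v)\to(P,u)$ with $(Q,v)$ principal is an isomorphism. A polyplex is a primitive element of $\mathrm{Elt}(\mathrm{Pol}_\omega^* )$. *)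

(* Defs.v *)
(* Free omega-precategories on omega-polygraphs,
   presented by syntax (terms) modulo the precategory axioms. *)
From Stdlib Require Import Arith.

Inductive term (G : nat -> Type) : Type :=
| gen (k : nat) (g : G k)
| tid (t : term G)
| tcomp (i : nat) (a b : term G).
Arguments gen {G} k g.
Arguments tid {G} t.
Arguments tcomp {G} i a b.

Fixpoint dim {G} (t : term G) : nat :=
  match t with
  | gen k _ => k
  | tid u => S (dim u)
  | tcomp _ a _ => dim a
  end.

Definition bnd (G : nat -> Type) := forall k, G (S k) -> term G.

(* boundary of a generator (junk value for 0-generators) *)
Definition gbound {G} (s : bnd G) (k : nat) : G k -> term G :=
  match k return G k -> term G with
  | 0 => fun g => gen 0 g
  | S k' => fun g => s k' g
  end.

Fixpoint tsrc {G} (s : bnd G) (t : term G) : term G :=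
  match t with
  | gen k g => gbound s k g
  | tid u => u
  | tcomp i a b =>
      if Nat.eqb (S i) (dim a) then tsrc s a
      else tcomp i (tsrc s a) (tsrc s b)
  end.

Fixpoint ttgt {G} (t : bnd G) (u : term G) : term G :=
  match u with
  | gen k g => gbound t k g
  | tid v => v
  | tcomp i a b =>
      if Nat.eqb (S i) (dim a) then ttgt t b
      else tcomp i (ttgt t a) (ttgt t b)
  end.

Definition src_at {G} (s : bnd G) (i : nat) (u : term G) : term G :=
  Nat.iter (dim u - i) (tsrc s) u.
Definition tgt_at {G} (t : bnd G) (i : nat) (u : term G) : term G :=
  Nat.iter (dim u - i) (ttgt t) u.
Definition idn {G} (n : nat) (u : term G) : term G := Nat.iter n tid u.

(** Well-formed terms (cells of the free precategory) and their equality: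
    the congruence generated by the axioms of omega-precategories, i.e. the
    axioms of strict omega-categories except the interchange law:
    associativity, unit laws, and 1_(a *_i b) = 1_a *_i 1_b. *)
Inductive wf (G : nat -> Type) (s t : bnd G) : term G -> Prop :=
| wf_gen k g : wf G s t (gen k g)
| wf_id u : wf G s t u -> wf G s t (tid u)
| wf_comp i a b :
    wf G s t a -> wf G s t b -> dim a = dim b -> i < dim a ->
    eqv G s t (tgt_at t i a) (src_at s i b) ->
    wf G s t (tcomp i a b)
with eqv (G : nat -> Type) (s t : bnd G) : term G -> term G -> Prop :=
| eqv_refl u : wf G s t u -> eqv G s t u u
| eqv_sym u v : eqv G s t u v -> eqv G s t v u
| eqv_trans u v w : eqv G s t u v -> eqv G s t v w -> eqv G s t u w
| eqv_id u v : eqv G s t u v -> eqv G s t (tid u) (tid v)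
| eqv_comp i a a' b b' :
    eqv G s t a a' -> eqv G s t b b' ->
    wf G s t (tcomp i a b) -> wf G s t (tcomp i a' b') ->
    eqv G s t (tcomp i a b) (tcomp i a' b')
| eqv_assoc i a b c :
    wf G s t (tcomp i (tcomp i a b) c) ->
    eqv G s t (tcomp i (tcomp i a b) c) (tcomp i a (tcomp i b c))
| eqv_unitl i a :
    wf G s t a -> i < dim a ->
    eqv G s t (tcomp i (idn (dim a - i) (src_at s i a)) a) a
| eqv_unitr i a :
    wf G s t a -> i < dim a ->
    eqv G s t (tcomp i a (idn (dim a - i) (tgt_at t i a))) a
| eqv_idcomp i a b :
    wf G s t (tcomp i a b) ->
    eqv G s t (tid (tcomp i a b)) (tcomp i (tid a) (tid b)).

(** omega-polygraphs: the source/target of a (k+1)-generator is a k-cell of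
    the free precategory (it only involves generators of dimension <= k),
    and globularity holds. *)
Record polygraph := Polygraph {
  gens : nat -> Type;
  psrc : bnd gens;
  ptgt : bnd gens;
  psrc_wf : forall k g, wf gens psrc ptgt (psrc k g) /\ dim (psrc k g) = k;
  ptgt_wf : forall k g, wf gens psrc ptgt (ptgt k g) /\ dim (ptgt k g) = k;
  pglob_s : forall k (g : gens (S (S k))),
      eqv gens psrc ptgt (tsrc psrc (psrc (S k) g)) (tsrc psrc (ptgt (S k) g));
  pglob_t : forall k (g : gens (S (S k))),
      eqv gens psrc ptgt (ttgt ptgt (psrc (S k) g)) (ttgt ptgt (ptgt (S k) g))
}.

Definition cell (P : polygraph) (u : term (gens P)) : Prop :=
  wf (gens P) (psrc P) (ptgt P) u.
Definition ceq (P : polygraph) (u v : term (gens P)) : Prop :=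
  eqv (gens P) (psrc P) (ptgt P) u v.

Fixpoint tmap {G H : nat -> Type} (f : forall k, G k -> H k) (u : term G)
  : term H :=
  match u with
  | gen k g => gen k (f k g)
  | tid v => tid (tmap f v)
  | tcomp i a b => tcomp i (tmap f a) (tmap f b)
  end.

Record pmorph (P Q : polygraph) := PMorph {
  pmap : forall k, gens P k -> gens Q k;
  pmap_src : forall k g, ceq Q (tmap pmap (psrc P k g)) (psrc Q k (pmap (S k) g));
  pmap_tgt : forall k g, ceq Q (tmap pmap (ptgt P k g)) (ptgt Q k (pmap (S k) g))
}.
Arguments pmap {P Q} _ k _.

(** Monomorphisms in Pol_omega (categorical definition; morphisms are
    equal when their generator maps agree). *)
Definition is_mono {P Q : polygraph} (F : pmorph P Q) : Prop :=
  forall (R : polygraph) (G1 G2 : pmorph R P),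
    (forall k x, pmap F k (pmap G1 k x) = pmap F k (pmap G2 k x)) ->
    forall k x, pmap G1 k x = pmap G2 k x.

Record elt := Elt {
  epol : polygraph;
  ecell : term (gens epol);
  ecell_wf : cell epol ecell
}.

Definition elt_hom (X Y : elt) (F : pmorph (epol X) (epol Y)) : Prop :=
  ceq (epol Y) (tmap (pmap F) (ecell X)) (ecell Y).

Definition elt_iso (X Y : elt) (F : pmorph (epol X) (epol Y)) : Prop :=
  exists G : pmorph (epol Y) (epol X),
    elt_hom Y X G /\
    (forall k x, pmap G k (pmap F k x) = x) /\
    (forall k y, pmap F k (pmap G k y) = y).

Definition principal (X : elt) : Prop :=
  forall (Y : elt) (F : pmorph (epol Y) (epol X)),
    elt_hom Y X F -> is_mono F -> elt_iso Y X F.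

Definition primitive (X : elt) : Prop :=
  principal X /\
  forall (Y : elt) (F : pmorph (epol Y) (epol X)),
    elt_hom Y X F -> principal Y -> elt_iso Y X F.

Definition polyplex (X : elt) : Prop := primitive X.

Definition elt_unit (X : elt) : elt :=
  Elt (epol X) (tid (ecell X)) (wf_id _ _ _ _ (ecell_wf X)).

(* Main.v *)
Require Import Defs.
From Stdlib Require Import Arith Lia.

Section Basic.
Variable P : polygraph.
Notation Wf := (wf (gens P) (psrc P) (ptgt P)).
Notation Eq := (eqv (gens P) (psrc P) (ptgt P)).
Notation Sr := (tsrc (psrc P)).
Notation Tg := (ttgt (ptgt P)).

Lemma dim_S x : dim (Sr x) = pred (dim x).
Proof.
  induction x as [k g| u IH | i a IHa b IHb]; cbn [tsrc ttgt dim].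
  - destruct k; simpl; [reflexivity|]. destruct (psrc_wf P k g); auto.
  - reflexivity.
  - destruct (Nat.eqb (S i) (dim a)); simpl; auto.
Qed.

Fixpoint bal {H} (x : term H) : Prop :=
  match x with
  | gen _ _ => True
  | tid u => bal u
  | tcomp i a b => bal a /\ bal b /\ dim a = dim b
  end.

Lemma wf_bal x : Wf x -> bal x.
Proof. induction 1; simpl; auto. Qed.

Lemma dim_T x : bal x -> dim (Tg x) = pred (dim x).
Proof.
  induction x as [k g| u IH | i a IHa b IHb]; cbn [tsrc ttgt dim bal]; intros Hb.
  - destruct k; simpl; [reflexivity|]. destruct (ptgt_wf P k g); auto.
  - reflexivity.
  - destruct Hb as (H1&H2&H3).
    destruct (Nat.eqb (S i) (dim a)); simpl; auto. rewrite H3; auto.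
Qed.

Lemma bal_T x : bal x -> bal (Tg x).
Proof.
  induction x as [k g| u IH | i a IHa b IHb]; cbn [tsrc ttgt dim bal]; intros Hb.
  - destruct k; simpl; [exact I|]. apply wf_bal. apply (ptgt_wf P k g).
  - exact Hb.
  - destruct Hb as (H1&H2&H3).
    destruct (Nat.eqb (S i) (dim a)); simpl; auto.
    repeat split; auto; rewrite !dim_T; auto; congruence.
Qed.

Lemma bal_S x : bal x -> bal (Sr x).
Proof.
  induction x as [k g| u IH | i a IHa b IHb]; cbn [tsrc ttgt dim bal]; intros Hb.
  - destruct k; simpl; [exact I|]. apply wf_bal. apply (psrc_wf P k g).
  - exact Hb.
  - destruct Hb as (H1&H2&H3).
    destruct (Nat.eqb (S i) (dim a)); simpl; auto.
    repeat split; auto; rewrite !dim_S; auto; congruence.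
Qed.

Lemma bal_iterT k x : bal x -> bal (Nat.iter k Tg x).
Proof. intros; induction k; simpl; auto using bal_T. Qed.

Lemma dim_iterS k x : dim (Nat.iter k Sr x) = dim x - k.
Proof. induction k; simpl; [lia|]. rewrite dim_S, IHk. lia. Qed.
Lemma dim_iterT k x : bal x -> dim (Nat.iter k Tg x) = dim x - k.
Proof. intros Hb; induction k; simpl; [lia|]. rewrite dim_T, IHk. lia. apply bal_iterT; auto. Qed.

Lemma dim_idn {H} k (x : term H) : dim (idn k x) = k + dim x.
Proof. induction k; simpl; auto. Qed.

Lemma dim_src_at i x : i <= dim x -> dim (src_at (psrc P) i x) = i.
Proof. intros. unfold src_at. rewrite dim_iterS. lia. Qed.
Lemma dim_tgt_at i x : bal x -> i <= dim x -> dim (tgt_at (ptgt P) i x) = i.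
Proof. intros. unfold tgt_at. rewrite dim_iterT; auto. lia. Qed.

Lemma iterS_idn k x : Nat.iter k Sr (idn k x) = x.
Proof. induction k; [reflexivity|]. rewrite Nat.iter_succ_r. exact IHk. Qed.
Lemma iterT_idn k x : Nat.iter k Tg (idn k x) = x.
Proof. induction k; [reflexivity|]. rewrite Nat.iter_succ_r. exact IHk. Qed.

Lemma src_at_idn i k x : dim x = i -> src_at (psrc P) i (idn k x) = x.
Proof. intros. unfold src_at. rewrite dim_idn. replace (k + dim x - i) with k by lia. apply iterS_idn. Qed.
Lemma tgt_at_idn i k x : dim x = i -> tgt_at (ptgt P) i (idn k x) = x.
Proof. intros. unfold tgt_at. rewrite dim_idn. replace (k + dim x - i) with k by lia. apply iterT_idn. Qed.

Lemma S_comp_eq i a b : S i = dim a -> Sr (tcomp i a b) = Sr a.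
Proof. intros H. cbn [tsrc ttgt]. rewrite <- H, Nat.eqb_refl. reflexivity. Qed.
Lemma S_comp_neq i a b : S i <> dim a -> Sr (tcomp i a b) = tcomp i (Sr a) (Sr b).
Proof. intros H. cbn [tsrc ttgt]. apply Nat.eqb_neq in H. rewrite H. reflexivity. Qed.
Lemma T_comp_eq i a b : S i = dim a -> Tg (tcomp i a b) = Tg b.
Proof. intros H. cbn [tsrc ttgt]. rewrite <- H, Nat.eqb_refl. reflexivity. Qed.
Lemma T_comp_neq i a b : S i <> dim a -> Tg (tcomp i a b) = tcomp i (Tg a) (Tg b).
Proof. intros H. cbn [tsrc ttgt]. apply Nat.eqb_neq in H. rewrite H. reflexivity. Qed.

Lemma eqv_dim x y : Eq x y -> dim x = dim y.
Proof.
  induction 1; simpl; try congruence.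
  - rewrite dim_idn, dim_src_at by lia. lia.
Qed.

Lemma wf_comp_inv i a b : Wf (tcomp i a b) ->
  Wf a /\ Wf b /\ dim a = dim b /\ i < dim a /\
  Eq (tgt_at (ptgt P) i a) (src_at (psrc P) i b).
Proof. intros H. inversion H; subst; auto. Qed.

Lemma idn_wf k x : Wf x -> Wf (idn k x).
Proof. intros; induction k; simpl; [auto| apply wf_id; auto]. Qed.

Lemma idn_eqv k x y : Eq x y -> Eq (idn k x) (idn k y).
Proof. intros; induction k; simpl; [auto| apply eqv_id; auto]. Qed.

Lemma unitl_wf i a : Wf a -> Wf (src_at (psrc P) i a) -> i < dim a ->
  Wf (tcomp i (idn (dim a - i) (src_at (psrc P) i a)) a).
Proof.
  intros Ha Hx Hi. constructor; auto.
  - apply idn_wf; auto.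
  - rewrite dim_idn, dim_src_at; lia.
  - rewrite dim_idn, dim_src_at; lia.
  - rewrite tgt_at_idn. constructor; auto. apply dim_src_at; lia.
Qed.

Lemma unitr_wf i a : Wf a -> Wf (tgt_at (ptgt P) i a) -> i < dim a ->
  Wf (tcomp i a (idn (dim a - i) (tgt_at (ptgt P) i a))).
Proof.
  intros Ha Hx Hi. constructor; auto.
  - apply idn_wf; auto.
  - rewrite dim_idn, dim_tgt_at; auto using wf_bal; lia.
  - rewrite src_at_idn. constructor; auto. apply dim_tgt_at; auto using wf_bal; lia.
Qed.

End Basic.

Scheme wf_mut := Induction for wf Sort Prop
  with eqv_mut := Induction for eqv Sort Prop.

Section Core.
Variable P : polygraph.
Notation Wf := (wf (gens P) (psrc P) (ptgt P)).
Notation Eq := (eqv (gens P) (psrc P) (ptgt P)).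
Notation Sr := (tsrc (psrc P)).
Notation Tg := (ttgt (ptgt P)).
Notation src_at := (src_at (psrc P)).
Notation tgt_at := (tgt_at (ptgt P)).

Definition Cwf n := forall x, Wf x -> dim x = n -> Wf (Sr x) /\ Wf (Tg x) /\
  (2 <= n -> Eq (Sr (Sr x)) (Sr (Tg x)) /\ Eq (Tg (Sr x)) (Tg (Tg x))).
Definition Ceq n := forall x y, Eq x y -> dim x = n -> Eq (Sr x) (Sr y) /\ Eq (Tg x) (Tg y).

Lemma iter2 {A} (f : A -> A) m x : Nat.iter (S (S m)) f x = Nat.iter m f (f (f x)).
Proof. rewrite !Nat.iter_succ_r. reflexivity. Qed.
Lemma iter1 {A} (f : A -> A) m x : Nat.iter (S m) f x = Nat.iter m f (f x).
Proof. apply Nat.iter_succ_r. Qed.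

Lemma core n : Cwf n /\ Ceq n.
Proof.
  induction n as [n IH] using lt_wf_ind.
  assert (iSwf : forall k x, Wf x -> dim x < n -> Wf (Nat.iter k Sr x)).
  { intros k x Wx Dx. induction k; simpl; auto.
    assert (dim (Nat.iter k Sr x) < n) by (rewrite dim_iterS; lia).
    apply (proj1 (proj1 (IH _ H) _ IHk eq_refl)). }
  assert (iTwf : forall k x, Wf x -> dim x < n -> Wf (Nat.iter k Tg x)).
  { intros k x Wx Dx. induction k; simpl; auto.
    assert (dim (Nat.iter k Tg x) < n) by (rewrite dim_iterT by (apply wf_bal; auto); lia).
    apply (proj1 (proj2 (proj1 (IH _ H) _ IHk eq_refl))). }
  assert (iSeq : forall k x y, Eq x y -> dim x < n -> Eq (Nat.iter k Sr x) (Nat.iter k Sr y)).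
  { intros k x y E Dx. induction k; simpl; auto.
    assert (dim (Nat.iter k Sr x) < n) by (rewrite dim_iterS; lia).
    apply (proj2 (IH _ H) _ _ IHk eq_refl). }
  assert (iTeq : forall k x y, Wf x -> Eq x y -> dim x < n -> Eq (Nat.iter k Tg x) (Nat.iter k Tg y)).
  { intros k x y Wx E Dx. induction k; simpl; auto.
    assert (dim (Nat.iter k Tg x) < n) by (rewrite dim_iterT by (apply wf_bal; auto); lia).
    apply (proj2 (IH _ H) _ _ IHk eq_refl). }
  assert (Hwf : Cwf n).
  { intros x0 w0.
    apply (wf_mut (gens P) (psrc P) (ptgt P)
      (fun x _ => dim x = n -> Wf (Sr x) /\ Wf (Tg x) /\
        (2 <= n -> Eq (Sr (Sr x)) (Sr (Tg x)) /\ Eq (Tg (Sr x)) (Tg (Tg x))))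
      (fun x y _ => True)); auto.
    +
      intros k g Hn. destruct k as [|k].
      * cbn. split; [constructor|split; [constructor|]]. simpl in Hn. lia.
      * cbn [tsrc ttgt gbound]. split; [apply (psrc_wf P)|split; [apply (ptgt_wf P)|]].
        intros H2. destruct k as [|k]; [simpl in Hn; lia|].
        cbn [tsrc ttgt gbound]. split; [apply (pglob_s P)|apply (pglob_t P)].
    +
      intros u w IHu Hn. cbn [tsrc ttgt]. simpl in Hn.
      split; [auto|split; [auto|]]. intros _.
      destruct (proj1 (IH (dim u) ltac:(lia)) u w eq_refl) as (A1 & A2 & _).
      split; apply eqv_refl; auto.
    +
      intros i a b wa IHa wb IHb Hd Hi He _ Hn. simpl in Hn.
      destruct (IHa Hn) as (Sa & Ta & Ga).
      destruct (IHb ltac:(lia)) as (Sb & Tb & Gb).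
      assert (Ba := wf_bal P _ wa). assert (Bb := wf_bal P _ wb).
      assert (WS : Wf (Sr (tcomp i a b))).
      { destruct (Nat.eq_dec (S i) (dim a)) as [E|E].
        - rewrite S_comp_eq; auto.
        - rewrite S_comp_neq by auto. apply wf_comp; auto.
          + rewrite !dim_S; congruence.
          + rewrite dim_S; lia.
          + unfold tgt_at, src_at in *. rewrite !dim_S.
            remember (dim a - i - 2) as m.
            replace (pred (dim a) - i) with (S m) by lia.
            replace (pred (dim b) - i) with (S m) by lia.
            replace (dim a - i) with (S (S m)) in He by lia.
            replace (dim b - i) with (S (S m)) in He by lia.
            rewrite iter2 in He. rewrite iter2 in He. rewrite iter1, iter1.
            eapply eqv_trans; [|exact He].
            apply iTeq.
            * apply (proj1 (proj2 (proj1 (IH (dim (Sr a)) ltac:(rewrite dim_S; lia)) _ Sa eq_refl))).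
            * apply Ga; lia.
            * rewrite dim_T, dim_S; [lia|]. apply bal_S; auto. }
      assert (WT : Wf (Tg (tcomp i a b))).
      { destruct (Nat.eq_dec (S i) (dim a)) as [E|E].
        - rewrite T_comp_eq; auto.
        - rewrite T_comp_neq by auto. apply wf_comp; auto.
          + rewrite !dim_T; auto; congruence.
          + rewrite dim_T; auto; lia.
          + unfold tgt_at, src_at in *. rewrite !dim_T; auto.
            remember (dim a - i - 2) as m.
            replace (pred (dim a) - i) with (S m) by lia.
            replace (pred (dim b) - i) with (S m) by lia.
            replace (dim a - i) with (S (S m)) in He by lia.
            replace (dim b - i) with (S (S m)) in He by lia.
            rewrite iter2 in He. rewrite iter2 in He. rewrite iter1, iter1.
            eapply eqv_trans; [exact He|].
            apply iSeq.
            * apply (proj1 (Gb ltac:(lia))).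
            * rewrite dim_S, dim_S; lia. }
      split; [exact WS|split; [exact WT|]].
      intros H2. destruct (Ga ltac:(lia)) as (Ga1 & Ga2). destruct (Gb ltac:(lia)) as (Gb1 & Gb2).
      destruct (Nat.eq_dec (S i) (dim a)) as [E1|E1].
      * rewrite S_comp_eq, T_comp_eq by auto.
        unfold tgt_at, src_at in He. replace (dim a - i) with 1 in He by lia.
        replace (dim b - i) with 1 in He by lia. simpl in He.
        destruct (proj2 (IH (dim (Tg a)) ltac:(rewrite dim_T; auto; lia)) _ _ He eq_refl) as (E2 & E3).
        split.
        -- eapply eqv_trans; [exact Ga1|]. eapply eqv_trans; [exact E2|exact Gb1].
        -- eapply eqv_trans; [exact Ga2|]. eapply eqv_trans; [exact E3|exact Gb2].
      * destruct (Nat.eq_dec (S (S i)) (dim a)) as [E2|E2].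
        -- rewrite S_comp_neq, T_comp_neq by auto.
           rewrite S_comp_eq by (rewrite dim_S; lia).
           rewrite S_comp_eq by (rewrite dim_T; auto; lia).
           rewrite T_comp_eq by (rewrite dim_S; lia).
           rewrite T_comp_eq by (rewrite dim_T; auto; lia).
           auto.
        -- assert (D1 : dim (Sr (tcomp i a b)) < n) by (rewrite dim_S; simpl; lia).
           assert (D2 : dim (Tg (tcomp i a b)) < n) by (rewrite dim_T; simpl; [lia|repeat split; auto]).
           destruct (proj1 (IH _ D1) _ WS eq_refl) as (W1 & W2 & _).
           destruct (proj1 (IH _ D2) _ WT eq_refl) as (W3 & W4 & _).
           rewrite S_comp_neq, T_comp_neq in * by auto.
           rewrite S_comp_neq in W1, W3 by (rewrite ?dim_S, ?dim_T; auto; lia).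
           rewrite T_comp_neq in W2, W4 by (rewrite ?dim_S, ?dim_T; auto; lia).
           rewrite !S_comp_neq by (rewrite ?dim_S, ?dim_T; auto; lia).
           rewrite !T_comp_neq by (rewrite ?dim_S, ?dim_T; auto; lia).
           split; apply eqv_comp; auto. }
  split; [exact Hwf|].
  - intros x0 y0 e0.
    apply (eqv_mut (gens P) (psrc P) (ptgt P)
      (fun x _ => True)
      (fun x y _ => dim x = n -> Eq (Sr x) (Sr y) /\ Eq (Tg x) (Tg y))).
    all: try (intros; exact I).
    +
      intros u w _ Hn. destruct (Hwf u w Hn) as (A1 & A2 & _).
      split; apply eqv_refl; auto.
    +
      intros u v e IHe Hn. rewrite <- (eqv_dim P _ _ e) in Hn.
      destruct (IHe Hn). split; apply eqv_sym; auto.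
    +
      intros u v w e1 IH1 e2 IH2 Hn.
      destruct (IH1 Hn). rewrite (eqv_dim P _ _ e1) in Hn. destruct (IH2 Hn).
      split; eapply eqv_trans; eauto.
    +
      intros u v e _ Hn. cbn [tsrc ttgt]. auto.
    +
      intros i a a' b b' ea IHa eb IHb wl _ wr _ Hn. simpl in Hn.
      destruct (wf_comp_inv P _ _ _ wl) as (wa & wb & Hd & Hi & He).
      destruct (wf_comp_inv P _ _ _ wr) as (wa' & wb' & Hd' & Hi' & He').
      assert (Da' := eqv_dim P _ _ ea). assert (Db' := eqv_dim P _ _ eb).
      destruct (Hwf _ wl Hn) as (WSl & WTl & _).
      destruct (Hwf _ wr ltac:(simpl; lia)) as (WSr & WTr & _).
      destruct (IHa Hn) as (E1 & E2). destruct (IHb ltac:(lia)) as (E3 & E4).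
      destruct (Nat.eq_dec (S i) (dim a)) as [E|E].
      * rewrite !S_comp_eq, !T_comp_eq by lia. auto.
      * rewrite !S_comp_neq, !T_comp_neq in * by lia.
        split; apply eqv_comp; auto.
    +
      intros i a b c w _ Hn. simpl in Hn.
      destruct (wf_comp_inv P _ _ _ w) as (wab & wc & Hd & Hi & He).
      destruct (wf_comp_inv P _ _ _ wab) as (wa & wb & Hd2 & Hi2 & He2).
      simpl in Hd.
      destruct (Hwf _ w ltac:(simpl; lia)) as (WS & WT & _).
      destruct (Nat.eq_dec (S i) (dim a)) as [E|E].
      * rewrite !S_comp_eq, !T_comp_eq in * by (simpl; lia).
        split; apply eqv_refl; auto.
      * rewrite !S_comp_neq, !T_comp_neq in * by (simpl; lia).
        split; apply eqv_assoc; auto.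
    +
      intros i a wa _ Hi Hn. simpl in Hn.
      rewrite dim_idn, dim_src_at in Hn by lia.
      assert (Dn : dim a = n) by lia. clear Hn.
      assert (Ba := wf_bal P _ wa).
      destruct (Hwf _ wa Dn) as (Sa & Ta & Ga).
      destruct (Nat.eq_dec (S i) (dim a)) as [E|E].
      * assert (Hk : dim a - i = 1) by lia. rewrite Hk.
        rewrite S_comp_eq by (rewrite dim_idn, dim_src_at; lia).
        rewrite T_comp_eq by (rewrite dim_idn, dim_src_at; lia).
        cbn [idn Nat.iter tsrc]. unfold src_at at 1. rewrite Hk. simpl.
        split; apply eqv_refl; auto.
      * assert (Hk : dim a - i = S (S (dim a - i - 2))) by lia.
        remember (dim a - i - 2) as m.
        assert (Hx : src_at i (Sr a) = src_at i a).
        { unfold Defs.src_at. rewrite dim_S. replace (pred (dim a) - i) with (S m) by lia.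
          rewrite Hk. rewrite (iter1 _ (S m)). reflexivity. }
        assert (Dx : dim (src_at i a) = i) by (apply dim_src_at; lia).
        assert (Wx : Wf (src_at i a)).
        { rewrite <- Hx. unfold Defs.src_at. apply iSwf; auto. rewrite dim_S; lia. }
        rewrite Hk.
        rewrite S_comp_neq by (rewrite dim_idn, dim_src_at; lia).
        rewrite T_comp_neq by (rewrite dim_idn, dim_src_at; lia).
        change (Sr (idn (S (S m)) (src_at i a))) with (idn (S m) (src_at i a)).
        change (Tg (idn (S (S m)) (src_at i a))) with (idn (S m) (src_at i a)).
        split.
        -- assert (U := eqv_unitl _ _ _ i (Sr a) Sa ltac:(rewrite dim_S; lia)).
           rewrite Hx in U. replace (dim (Sr a) - i) with (S m) in U by (rewrite dim_S; lia).
           exact U.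
        -- assert (U := eqv_unitl _ _ _ i (Tg a) Ta ltac:(rewrite dim_T; auto; lia)).
           replace (dim (Tg a) - i) with (S m) in U by (rewrite dim_T; auto; lia).
           assert (Hy : Eq (src_at i a) (src_at i (Tg a))).
           { unfold Defs.src_at. rewrite dim_T by auto.
             replace (pred (dim a) - i) with (S m) by lia. rewrite Hk.
             rewrite iter2, iter1. apply iSeq. apply Ga; lia. rewrite !dim_S; lia. }
           assert (Wy : Wf (src_at i (Tg a))).
           { unfold Defs.src_at. apply iSwf; auto. rewrite dim_T; auto; lia. }
           eapply eqv_trans; [|exact U].
           apply eqv_comp; auto.
           ++ apply idn_eqv; auto.
           ++ apply eqv_refl; auto.
           ++ apply wf_comp; auto. apply idn_wf; auto.
              rewrite dim_idn, dim_T; auto; lia. rewrite dim_idn; lia.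
              rewrite tgt_at_idn; auto.
           ++ apply wf_comp; auto. apply idn_wf; auto.
              rewrite dim_idn, dim_T, dim_src_at; auto; try lia. rewrite dim_T; auto; lia.
              rewrite dim_idn, dim_src_at; try lia. rewrite dim_T; auto; lia.
              rewrite tgt_at_idn. apply eqv_refl; auto. apply dim_src_at. rewrite dim_T; auto; lia.
    +
      intros i a wa _ Hi Hn. simpl in Hn.
      assert (Ba := wf_bal P _ wa).
      destruct (Hwf _ wa Hn) as (Sa & Ta & Ga).
      destruct (Nat.eq_dec (S i) (dim a)) as [E|E].
      * assert (Hk : dim a - i = 1) by lia. rewrite Hk.
        rewrite S_comp_eq by lia.
        rewrite T_comp_eq by lia.
        cbn [idn Nat.iter ttgt]. unfold tgt_at at 1. rewrite Hk. simpl.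
        split; apply eqv_refl; auto.
      * assert (Hk : dim a - i = S (S (dim a - i - 2))) by lia.
        remember (dim a - i - 2) as m.
        assert (Hx : tgt_at i (Tg a) = tgt_at i a).
        { unfold Defs.tgt_at. rewrite dim_T by auto. replace (pred (dim a) - i) with (S m) by lia.
          rewrite Hk. rewrite (iter1 _ (S m)). reflexivity. }
        assert (Dx : dim (tgt_at i a) = i) by (apply dim_tgt_at; auto; lia).
        assert (Wx : Wf (tgt_at i a)).
        { rewrite <- Hx. unfold Defs.tgt_at. apply iTwf; auto. rewrite dim_T; auto; lia. }
        rewrite Hk.
        rewrite S_comp_neq by lia.
        rewrite T_comp_neq by lia.
        change (Sr (idn (S (S m)) (tgt_at i a))) with (idn (S m) (tgt_at i a)).
        change (Tg (idn (S (S m)) (tgt_at i a))) with (idn (S m) (tgt_at i a)).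
        split.
        -- assert (U := eqv_unitr _ _ _ i (Sr a) Sa ltac:(rewrite dim_S; lia)).
           replace (dim (Sr a) - i) with (S m) in U by (rewrite dim_S; lia).
           assert (Hy : Eq (tgt_at i a) (tgt_at i (Sr a))).
           { unfold Defs.tgt_at. rewrite dim_S.
             replace (pred (dim a) - i) with (S m) by lia. rewrite Hk.
             rewrite iter2, iter1. apply iTeq.
             apply (proj1 (proj2 (proj1 (IH (dim (Tg a)) ltac:(rewrite dim_T; auto; lia)) _ Ta eq_refl))).
             apply eqv_sym, Ga; lia. rewrite !dim_T; auto using bal_T; lia. }
           assert (Wy : Wf (tgt_at i (Sr a))).
           { unfold Defs.tgt_at. apply iTwf; auto. rewrite dim_S; lia. }
           assert (Dy : dim (tgt_at i (Sr a)) = i).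
           { apply dim_tgt_at. apply bal_S; auto. rewrite dim_S; lia. }
           eapply eqv_trans; [|exact U].
           apply eqv_comp; auto.
           ++ apply eqv_refl; auto.
           ++ apply idn_eqv; auto.
           ++ apply wf_comp; auto. apply idn_wf; auto.
              rewrite dim_idn, dim_S; lia. rewrite dim_S; lia.
              rewrite src_at_idn; auto. apply eqv_sym; auto.
           ++ apply wf_comp; auto. apply idn_wf; auto.
              rewrite dim_idn, dim_S; lia. rewrite dim_S; lia.
              rewrite src_at_idn; auto. apply eqv_refl; auto.
        -- assert (U := eqv_unitr _ _ _ i (Tg a) Ta ltac:(rewrite dim_T; auto; lia)).
           rewrite Hx in U. replace (dim (Tg a) - i) with (S m) in U by (rewrite dim_T; auto; lia).
           exact U.
    +
      intros i a b w _ Hn.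
      destruct (wf_comp_inv P _ _ _ w) as (wa & wb & Hd & Hi & He).
      rewrite S_comp_neq, T_comp_neq by (simpl; lia).
      cbn [tsrc ttgt].
      split; apply eqv_refl; auto.
    + exact e0.
Qed.
End Core.

Section Glob.
Variable P : polygraph.
Notation Wf := (wf (gens P) (psrc P) (ptgt P)).
Notation Eq := (eqv (gens P) (psrc P) (ptgt P)).
Notation Sr := (tsrc (psrc P)).
Notation Tg := (ttgt (ptgt P)).
Notation src_at := (src_at (psrc P)).
Notation tgt_at := (tgt_at (ptgt P)).

Lemma S_wf x : Wf x -> Wf (Sr x).
Proof. intros w. exact (proj1 (proj1 (core P (dim x)) x w eq_refl)). Qed.
Lemma T_wf x : Wf x -> Wf (Tg x).
Proof. intros w. exact (proj1 (proj2 (proj1 (core P (dim x)) x w eq_refl))). Qed.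
Lemma S_eqv x y : Eq x y -> Eq (Sr x) (Sr y).
Proof. intros e. exact (proj1 (proj2 (core P (dim x)) x y e eq_refl)). Qed.
Lemma T_eqv x y : Eq x y -> Eq (Tg x) (Tg y).
Proof. intros e. exact (proj2 (proj2 (core P (dim x)) x y e eq_refl)). Qed.

Lemma iterS_wf k x : Wf x -> Wf (Nat.iter k Sr x).
Proof. intros; induction k; simpl; auto using S_wf. Qed.
Lemma iterT_wf k x : Wf x -> Wf (Nat.iter k Tg x).
Proof. intros; induction k; simpl; auto using T_wf. Qed.
Lemma iterS_eqv k x y : Eq x y -> Eq (Nat.iter k Sr x) (Nat.iter k Sr y).
Proof. intros; induction k; simpl; auto using S_eqv. Qed.
Lemma iterT_eqv k x y : Eq x y -> Eq (Nat.iter k Tg x) (Nat.iter k Tg y).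
Proof. intros; induction k; simpl; auto using T_eqv. Qed.

Lemma iterT_comp i m : forall a b, dim a = dim b -> dim a = i + S m -> bal a -> bal b ->
  Nat.iter (S m) Tg (tcomp i a b) = Nat.iter (S m) Tg b.
Proof.
  induction m; intros a b Hd Hm Ba Bb.
  - simpl. apply T_comp_eq. lia.
  - rewrite (iter1 _ (S m) (tcomp i a b)), (iter1 _ (S m) b). rewrite T_comp_neq by lia.
    apply IHm; try apply bal_T; auto; rewrite ?dim_T; auto; lia.
Qed.
Lemma iterS_comp i m : forall a b, dim a = dim b -> dim a = i + S m -> bal a -> bal b ->
  Nat.iter (S m) Sr (tcomp i a b) = Nat.iter (S m) Sr a.
Proof.
  induction m; intros a b Hd Hm Ba Bb.
  - simpl. apply S_comp_eq. lia.
  - rewrite (iter1 _ (S m) (tcomp i a b)), (iter1 _ (S m) a). rewrite S_comp_neq by lia.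
    apply IHm; try apply bal_S; auto; rewrite ?dim_S; auto; lia.
Qed.
Lemma tgt_at_comp i a b : Wf a -> Wf b -> dim a = dim b -> i < dim a ->
  tgt_at i (tcomp i a b) = tgt_at i b.
Proof.
  intros wa wb Hd Hi. unfold Defs.tgt_at. simpl. rewrite <- Hd.
  replace (dim a - i) with (S (dim a - i - 1)) by lia.
  apply iterT_comp; auto using wf_bal; lia.
Qed.
Lemma src_at_comp i a b : Wf a -> Wf b -> dim a = dim b -> i < dim a ->
  src_at i (tcomp i a b) = src_at i a.
Proof.
  intros wa wb Hd Hi. unfold Defs.src_at. simpl.
  replace (dim a - i) with (S (dim a - i - 1)) by lia.
  apply iterS_comp; auto using wf_bal; lia.
Qed.

Lemma eqv_wf x y : Eq x y -> Wf x /\ Wf y.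
Proof.
  induction 1; try (split; auto; fail).
  - tauto.
  - tauto.
  - split; apply wf_id; tauto.
  - destruct (wf_comp_inv P _ _ _ H) as (wab & wc & Hd & Hi & He).
    destruct (wf_comp_inv P _ _ _ wab) as (wa & wb & Hd2 & Hi2 & He2).
    simpl in Hd. split; auto.
    apply wf_comp; auto.
    + apply wf_comp; auto; try lia.
      rewrite tgt_at_comp in He; auto.
    + rewrite src_at_comp; auto; try lia.
  - split; auto. apply unitl_wf; auto. unfold Defs.src_at; apply iterS_wf; auto.
  - split; auto. apply unitr_wf; auto. unfold Defs.tgt_at; apply iterT_wf; auto.
  - destruct (wf_comp_inv P _ _ _ H) as (wa & wb & Hd & Hi & He).
    split; [apply wf_id; auto|].
    apply wf_comp; try apply wf_id; auto; simpl; try lia.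
    unfold Defs.tgt_at, Defs.src_at in *. cbn [dim].
    replace (S (dim a) - i) with (S (dim a - i)) by lia.
    replace (S (dim b) - i) with (S (dim b - i)) by lia.
    rewrite !iter1. exact He.
Qed.

Lemma tgt_at_tid i x : i <= dim x -> tgt_at i (tid x) = tgt_at i x.
Proof. intros. unfold Defs.tgt_at. cbn [dim]. replace (S (dim x) - i) with (S (dim x - i)) by lia.
  rewrite iter1. reflexivity. Qed.
Lemma src_at_tid i x : i <= dim x -> src_at i (tid x) = src_at i x.
Proof. intros. unfold Defs.src_at. cbn [dim]. replace (S (dim x) - i) with (S (dim x - i)) by lia.
  rewrite iter1. reflexivity. Qed.
Lemma tgt_at_self x : tgt_at (dim x) x = x.
Proof. unfold Defs.tgt_at. rewrite Nat.sub_diag. reflexivity. Qed.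
Lemma src_at_self x : src_at (dim x) x = x.
Proof. unfold Defs.src_at. rewrite Nat.sub_diag. reflexivity. Qed.

Fixpoint top {H} (x : term H) : bool :=
  match x with gen _ _ => true | tid _ => false | tcomp _ a b => orb (top a) (top b) end.

Lemma top_eqv x y : Eq x y -> top x = top y.
Proof.
  induction 1; cbn [top]; try congruence; try reflexivity.
  - symmetry. apply Bool.orb_assoc.
  - destruct (dim a - i) eqn:E; [lia|]. reflexivity.
  - destruct (dim a - i) eqn:E; [lia|]. cbn. apply Bool.orb_false_r.
Qed.

Lemma reflect_id x : Wf x -> top x = false -> Eq x (tid (Sr x)).
Proof.
  intros w. induction w as [k g|u wu _|i a b wa IHa wb IHb Hd Hi He] using wf_ind; cbn [top]; intros Ht.
  - discriminate.
  - cbn [tsrc]. apply eqv_refl. apply wf_id; auto.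
  - apply Bool.orb_false_iff in Ht. destruct Ht as [Ha Hb].
    specialize (IHa Ha). specialize (IHb Hb).
    assert (Wab : Wf (tcomp i a b)) by (apply wf_comp; auto).
    assert (Da := eqv_dim P _ _ IHa). cbn [dim] in Da.
    assert (Db := eqv_dim P _ _ IHb). cbn [dim] in Db.
    rewrite dim_S in Da, Db.
    assert (Sa := S_wf _ wa). assert (Sb := S_wf _ wb).
    destruct (Nat.eq_dec (S i) (dim a)) as [E|E].
    + rewrite S_comp_eq by auto. cbn [tsrc ttgt] in *.
      unfold Defs.tgt_at, Defs.src_at in He. replace (dim a - i) with 1 in He by lia.
      replace (dim b - i) with 1 in He by lia. simpl in He.
      assert (Hab : Eq (Sr a) (Sr b)).
      { eapply eqv_trans; [|exact He]. apply eqv_sym. apply (T_eqv _ _ IHa). }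
      assert (Di : dim (Sr a) = i) by (rewrite dim_S; lia).
      assert (Di' : dim (Sr b) = i) by (rewrite dim_S; lia).
      assert (W1 : Wf (tcomp i (tid (Sr a)) (tid (Sr b)))).
      { apply wf_comp; try apply wf_id; auto; cbn [dim]; try lia.
        rewrite tgt_at_tid, src_at_tid by lia. rewrite <- Di at 1. rewrite <- Di' at 1.
        rewrite tgt_at_self, src_at_self. exact Hab. }
      assert (W2 : Wf (tcomp i (tid (Sr b)) (tid (Sr b)))).
      { apply wf_comp; try apply wf_id; auto; cbn [dim]; try lia.
        rewrite tgt_at_tid, src_at_tid by lia. rewrite <- Di'.
        rewrite tgt_at_self, src_at_self. apply eqv_refl; auto. }
      assert (U := eqv_unitl _ _ _ i (tid (Sr b)) (wf_id _ _ _ _ Sb) ltac:(cbn [dim]; lia)).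
      replace (dim (tid (Sr b)) - i) with 1 in U by (cbn [dim]; lia).
      rewrite src_at_tid in U by lia. replace (src_at i (Sr b)) with (Sr b) in U by (rewrite <- Di'; symmetry; apply src_at_self).
      eapply eqv_trans. apply eqv_comp; [exact IHa|exact IHb|exact Wab|exact W1].
      eapply eqv_trans. apply eqv_comp; [apply eqv_id, Hab|apply eqv_refl, wf_id, Sb|exact W1|exact W2].
      eapply eqv_trans. exact U. apply eqv_id, eqv_sym, Hab.
    + rewrite S_comp_neq by auto.
      assert (WS := S_wf _ Wab). rewrite S_comp_neq in WS by auto.
      destruct (wf_comp_inv P _ _ _ WS) as (_ & _ & Hd' & Hi' & He').
      assert (W1 : Wf (tcomp i (tid (Sr a)) (tid (Sr b)))).
      { apply wf_comp; try apply wf_id; auto; cbn [dim]; try lia.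
        rewrite tgt_at_tid, src_at_tid by lia. exact He'. }
      eapply eqv_trans. apply eqv_comp; [exact IHa|exact IHb|exact Wab|exact W1].
      apply eqv_sym, eqv_idcomp, WS.
Qed.
End Glob.

Lemma dim_tmap {G H} (f : forall k, G k -> H k) x : dim (tmap f x) = dim x.
Proof. induction x; simpl; auto. Qed.
Lemma tmap_idn {G H} (f : forall k, G k -> H k) k x : tmap f (idn k x) = idn k (tmap f x).
Proof. induction k; simpl; auto. rewrite IHk. reflexivity. Qed.
Lemma top_tmap {G H} (f : forall k, G k -> H k) x : top (tmap f x) = top x.
Proof. induction x; simpl; auto. rewrite IHx1, IHx2. reflexivity. Qed.

Section Map.
Variables P Q : polygraph.
Variable F : pmorph P Q.
Notation f := (pmap F).
Notation WP := (wf (gens P) (psrc P) (ptgt P)).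
Notation EP := (eqv (gens P) (psrc P) (ptgt P)).
Notation SP := (tsrc (psrc P)).
Notation TP := (ttgt (ptgt P)).
Notation WQ := (wf (gens Q) (psrc Q) (ptgt Q)).
Notation EQ := (eqv (gens Q) (psrc Q) (ptgt Q)).
Notation SQ := (tsrc (psrc Q)).
Notation TQ := (ttgt (ptgt Q)).

Definition Dwf n := forall x, WP x -> dim x = n -> WQ (tmap f x) /\
  EQ (tmap f (SP x)) (SQ (tmap f x)) /\ EQ (tmap f (TP x)) (TQ (tmap f x)).
Definition Deq n := forall x y, EP x y -> dim x = n -> EQ (tmap f x) (tmap f y).

Lemma core2 n : Dwf n /\ Deq n.
Proof.
  induction n as [n IH] using lt_wf_ind.
  assert (itS : forall k x, WP x -> dim x < n ->
            EQ (tmap f (Nat.iter k SP x)) (Nat.iter k SQ (tmap f x))).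
  { intros k x Wx Dx. induction k; simpl.
    - apply eqv_refl. exact (proj1 (proj1 (IH _ Dx) x Wx eq_refl)).
    - assert (D : dim (Nat.iter k SP x) < n) by (rewrite dim_iterS; lia).
      eapply eqv_trans.
      + exact (proj1 (proj2 (proj1 (IH _ D) _ (iterS_wf P k x Wx) eq_refl))).
      + apply S_eqv; auto. }
  assert (itT : forall k x, WP x -> dim x < n ->
            EQ (tmap f (Nat.iter k TP x)) (Nat.iter k TQ (tmap f x))).
  { intros k x Wx Dx. induction k; simpl.
    - apply eqv_refl. exact (proj1 (proj1 (IH _ Dx) x Wx eq_refl)).
    - assert (D : dim (Nat.iter k TP x) < n) by (rewrite dim_iterT by (apply wf_bal; auto); lia).
      eapply eqv_trans.
      + exact (proj2 (proj2 (proj1 (IH _ D) _ (iterT_wf P k x Wx) eq_refl))).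
      + apply T_eqv; auto. }
  assert (hT : forall a i, WP a -> dim a = n -> i < n ->
            EQ (tmap f (TP a)) (TQ (tmap f a)) ->
            EQ (tmap f (tgt_at (ptgt P) i a)) (tgt_at (ptgt Q) i (tmap f a))).
  { intros a i Wa Da Hi Ha. unfold tgt_at. rewrite dim_tmap.
    replace (dim a - i) with (S (n - i - 1)) by lia. rewrite !iter1.
    eapply eqv_trans.
    - apply itT. apply T_wf; auto. rewrite dim_T by (apply wf_bal; auto). lia.
    - apply iterT_eqv; auto. }
  assert (hS : forall a i, WP a -> dim a = n -> i < n ->
            EQ (tmap f (SP a)) (SQ (tmap f a)) ->
            EQ (tmap f (src_at (psrc P) i a)) (src_at (psrc Q) i (tmap f a))).
  { intros a i Wa Da Hi Ha. unfold src_at. rewrite dim_tmap.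
    replace (dim a - i) with (S (n - i - 1)) by lia. rewrite !iter1.
    eapply eqv_trans.
    - apply itS. apply S_wf; auto. rewrite dim_S. lia.
    - apply iterS_eqv; auto. }
  assert (Hwf : Dwf n).
  { intros x0 w0.
    apply (wf_mut (gens P) (psrc P) (ptgt P)
      (fun x _ => dim x = n -> WQ (tmap f x) /\
        EQ (tmap f (SP x)) (SQ (tmap f x)) /\ EQ (tmap f (TP x)) (TQ (tmap f x)))
      (fun x y _ => True)); auto.
    + intros k g Hn. split; [constructor|].
      destruct k as [|k].
      * cbn. split; apply eqv_refl; constructor.
      * cbn [tsrc ttgt gbound tmap]. split; [apply (pmap_src _ _ F)|apply (pmap_tgt _ _ F)].
    + intros u w _ Hn. cbn [tmap tsrc ttgt]. cbn [dim] in Hn.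
      destruct (proj1 (IH (dim u) ltac:(lia)) u w eq_refl) as (W1 & _).
      split; [apply wf_id; auto|split; apply eqv_refl; auto].
    + intros i a b wa IHa wb IHb Hd Hi He _ Hn. cbn [dim] in Hn.
      destruct (IHa Hn) as (Wa & Sa & Ta).
      destruct (IHb ltac:(lia)) as (Wb & Sb & Tb).
      assert (Wt : WQ (tcomp i (tmap f a) (tmap f b))).
      { apply wf_comp; auto; rewrite ?dim_tmap; auto.
        eapply eqv_trans; [apply eqv_sym, hT; auto; lia|].
        eapply eqv_trans; [|apply hS; auto; lia].
        apply (proj2 (IH i ltac:(lia)) _ _ He). apply dim_tgt_at; [apply wf_bal; auto|lia]. }
      split; [exact Wt|].
      destruct (Nat.eq_dec (S i) (dim a)) as [E|E].
      * cbn [tmap]. rewrite (S_comp_eq P), (S_comp_eq Q), (T_comp_eq P), (T_comp_eq Q)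
          by (rewrite ?dim_tmap; lia). auto.
      * assert (D : dim (SP (tcomp i a b)) < n) by (rewrite dim_S; cbn [dim]; lia).
        assert (D' : dim (TP (tcomp i a b)) < n)
          by (rewrite dim_T; cbn [dim]; [lia|repeat split; auto using wf_bal]).
        assert (W0 : WP (tcomp i a b)) by (apply wf_comp; auto).
        assert (W1 := proj1 (proj1 (IH _ D) _ (S_wf P _ W0) eq_refl)).
        assert (W2 := proj1 (proj1 (IH _ D') _ (T_wf P _ W0) eq_refl)).
        assert (W3 := S_wf Q _ Wt). assert (W4 := T_wf Q _ Wt).
        cbn [tmap]. cbn [tmap] in *.
        rewrite (S_comp_neq P), (T_comp_neq P) in * by lia.
        rewrite (S_comp_neq Q), (T_comp_neq Q) in * by (rewrite ?dim_tmap; lia).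
        cbn [tmap] in *.
        split; apply eqv_comp; auto. }
  split; [exact Hwf|].
  intros x0 y0 e0.
  apply (eqv_mut (gens P) (psrc P) (ptgt P) (fun x _ => True)
    (fun x y _ => dim x = n -> EQ (tmap f x) (tmap f y))).
  all: try (intros; exact I).
  - intros u w _ Hn. apply eqv_refl. apply (Hwf u w Hn).
  - intros u v e IHe Hn. rewrite <- (eqv_dim P _ _ e) in Hn. apply eqv_sym; auto.
  - intros u v w e1 IH1 e2 IH2 Hn. eapply eqv_trans; [apply IH1; auto|].
    apply IH2. rewrite <- (eqv_dim P _ _ e1). auto.
  - intros u v e IHe Hn. cbn [tmap]. cbn [dim] in Hn.
    apply eqv_id. apply (proj2 (IH (dim u) ltac:(lia)) _ _ e eq_refl).
  - intros i a a' b b' ea IHa eb IHb wl _ wr _ Hn. cbn [dim] in Hn.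
    destruct (wf_comp_inv P _ _ _ wl) as (wa & wb & Hd & Hi & He).
    cbn [tmap]. apply eqv_comp.
    + auto.
    + apply IHb; lia.
    + exact (proj1 (Hwf _ wl Hn)).
    + apply (proj1 (Hwf _ wr ltac:(cbn [dim]; rewrite <- (eqv_dim P _ _ ea); auto))).
  - intros i a b c w _ Hn. cbn [tmap]. apply eqv_assoc. exact (proj1 (Hwf _ w Hn)).
  - intros i a wa _ Hi Hn. cbn [dim] in Hn.
    rewrite dim_idn, dim_src_at in Hn by lia.
    assert (Dn : dim a = n) by lia. clear Hn.
    destruct (Hwf _ wa Dn) as (Wa & Sa & Ta).
    cbn [tmap]. rewrite tmap_idn.
    assert (U := eqv_unitl _ _ _ i (tmap f a) Wa ltac:(rewrite dim_tmap; lia)).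
    rewrite dim_tmap in U.
    assert (Hx := hS a i wa Dn ltac:(lia) Sa).
    assert (Wx : WP (src_at (psrc P) i a)) by (apply iterS_wf; auto).
    assert (Dx : dim (src_at (psrc P) i a) = i) by (apply dim_src_at; lia).
    assert (Wx' := proj1 (proj1 (IH i ltac:(lia)) _ Wx Dx)).
    assert (Wr := unitl_wf Q i (tmap f a) Wa (iterS_wf Q _ _ Wa) ltac:(rewrite dim_tmap; lia)).
    rewrite dim_tmap in Wr.
    eapply eqv_trans; [|exact U].
    apply eqv_comp; auto.
    + apply idn_eqv; auto.
    + apply eqv_refl; auto.
    + apply wf_comp; auto.
      * apply idn_wf; auto.
      * rewrite dim_idn, !dim_tmap, Dx; lia.
      * rewrite dim_idn, !dim_tmap, Dx; lia.
      * rewrite tgt_at_idn; auto. rewrite dim_tmap; auto.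
  - intros i a wa _ Hi Hn. cbn [dim] in Hn.
    assert (Ba := wf_bal P _ wa).
    destruct (Hwf _ wa Hn) as (Wa & Sa & Ta).
    cbn [tmap]. rewrite tmap_idn.
    assert (U := eqv_unitr _ _ _ i (tmap f a) Wa ltac:(rewrite dim_tmap; lia)).
    rewrite dim_tmap in U.
    assert (Hx := hT a i wa Hn ltac:(lia) Ta).
    assert (Wx : WP (tgt_at (ptgt P) i a)) by (apply iterT_wf; auto).
    assert (Dx : dim (tgt_at (ptgt P) i a) = i) by (apply dim_tgt_at; auto; lia).
    assert (Wx' := proj1 (proj1 (IH i ltac:(lia)) _ Wx Dx)).
    assert (Wr := unitr_wf Q i (tmap f a) Wa (iterT_wf Q _ _ Wa) ltac:(rewrite dim_tmap; lia)).
    rewrite dim_tmap in Wr.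
    eapply eqv_trans; [|exact U].
    apply eqv_comp; auto.
    + apply eqv_refl; auto.
    + apply idn_eqv; auto.
    + apply wf_comp; auto.
      * apply idn_wf; auto.
      * rewrite dim_idn, !dim_tmap, Dx; lia.
      * rewrite dim_tmap; lia.
      * rewrite src_at_idn; [apply eqv_sym; auto|rewrite dim_tmap; auto].
  - intros i a b w _ Hn. cbn [dim] in Hn. cbn [tmap]. apply eqv_idcomp.
    exact (proj1 (proj1 (IH (dim a) ltac:(lia)) _ w eq_refl)).
  - exact e0.
Qed.

Lemma tmap_wf x : WP x -> WQ (tmap f x).
Proof. intros w. exact (proj1 (proj1 (core2 (dim x)) x w eq_refl)). Qed.
Lemma tmap_S x : WP x -> EQ (tmap f (SP x)) (SQ (tmap f x)).
Proof. intros w. exact (proj1 (proj2 (proj1 (core2 (dim x)) x w eq_refl))). Qed.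
Lemma tmap_eqv x y : EP x y -> EQ (tmap f x) (tmap f y).
Proof. intros e. exact (proj2 (core2 (dim x)) x y e eq_refl). Qed.
End Map.

Lemma prinA (Q : polygraph) v hv : principal (Elt Q v hv) ->
  principal (Elt Q (tid v) (wf_id _ _ _ _ hv)).
Proof.
  intros HP [R z hz] H hom mono. unfold elt_hom in hom. simpl in hom, H.
  assert (Ht : top z = false).
  { rewrite <- (top_tmap (pmap H) z), (top_eqv Q _ _ hom). reflexivity. }
  assert (Ez := reflect_id R z hz Ht).
  assert (hom0 : elt_hom (Elt R _ (S_wf R z hz)) (Elt Q v hv) H).
  { unfold elt_hom; simpl. eapply eqv_trans; [apply (tmap_S R Q H z hz)|].
    exact (S_eqv Q _ _ hom). }
  destruct (HP (Elt R _ (S_wf R z hz)) H hom0 mono) as (G & hG & i1 & i2).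
  exists G. split; [|auto]. unfold elt_hom in *; simpl in *.
  eapply eqv_trans; [apply eqv_id, hG|apply eqv_sym, Ez].
Qed.

Lemma prinB (Q : polygraph) w hw v hv : principal (Elt Q w hw) ->
  eqv (gens Q) (psrc Q) (ptgt Q) w (tid v) -> principal (Elt Q v hv).
Proof.
  intros HP Ew [R z hz] H hom mono. unfold elt_hom in hom. simpl in hom.
  assert (hom' : elt_hom (Elt R (tid z) (wf_id _ _ _ _ hz)) (Elt Q w hw) H).
  { unfold elt_hom; simpl. eapply eqv_trans; [apply eqv_id, hom|apply eqv_sym, Ew]. }
  destruct (HP (Elt R (tid z) (wf_id _ _ _ _ hz)) H hom' mono) as (G & hG & i1 & i2).
  exists G. split; [|auto]. unfold elt_hom in *; simpl in *.
  assert (Ev : eqv (gens Q) (psrc Q) (ptgt Q) v (tsrc (psrc Q) w))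
    by exact (eqv_sym _ _ _ _ _ (S_eqv Q _ _ Ew)).
  eapply eqv_trans; [apply (tmap_eqv Q R G _ _ Ev)|].
  eapply eqv_trans; [apply (tmap_S Q R G w hw)|].
  exact (S_eqv R _ _ hG).
Qed.

Theorem lemma5p1 (P : polygraph) (u : term (gens P)) (hu : cell P u) :
  polyplex (Elt P u hu) <-> polyplex (elt_unit (Elt P u hu)).
Proof.
  split.
  - intros [Hp Hprim]. split.
    + apply prinA; auto.
    + intros [Q w hw] F hom Hpr. unfold elt_hom in hom; simpl in hom, F.
      assert (Ht : top w = false).
      { rewrite <- (top_tmap (pmap F) w), (top_eqv P _ _ hom). reflexivity. }
      assert (Ew := reflect_id Q w hw Ht).
      assert (HprY := prinB Q w hw _ (S_wf Q w hw) Hpr Ew).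
      assert (homY : elt_hom (Elt Q _ (S_wf Q w hw)) (Elt P u hu) F).
      { unfold elt_hom; simpl. eapply eqv_trans; [apply (tmap_S Q P F w hw)|].
        exact (S_eqv P _ _ hom). }
      destruct (Hprim (Elt Q _ (S_wf Q w hw)) F homY HprY) as (G & hG & i1 & i2).
      exists G. split; [|auto]. unfold elt_hom in *; simpl in *.
      eapply eqv_trans; [apply eqv_id, hG|apply eqv_sym, Ew].
  - intros [Hp Hprim]. split.
    + apply (prinB P (tid u) (wf_id _ _ _ _ hu) u hu Hp). apply eqv_refl, wf_id, hu.
    + intros [Q v hv] F hom Hpr. unfold elt_hom in hom; simpl in hom, F.
      assert (HprY := prinA Q v hv Hpr).
      assert (homY : elt_hom (Elt Q (tid v) (wf_id _ _ _ _ hv)) (elt_unit (Elt P u hu)) F).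
      { unfold elt_hom; simpl. apply eqv_id, hom. }
      destruct (Hprim (Elt Q (tid v) (wf_id _ _ _ _ hv)) F homY HprY) as (G & hG & i1 & i2).
      exists G. split; [|auto]. unfold elt_hom in *; simpl in *.
      exact (S_eqv Q _ _ hG).
Qed.
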